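(* (1) For $[P]\in G(3,V)$ (a plane in $\mathbb P^6$), the subspace $L^2_P:=\{Q\in H^0(\mathcal O_{\mathbb P^6}(2)):P\subset\{Q=0\}\}$ has codimension $6$ in $H^0(\mathcal O_{\mathbb P^6}(2))$. For planes $P\neq P'$, the subspace $L^2_{P,P'}:=\{Q\in H^0(\mathcal O_{\mathbb P^6}(2)):P\cup P'\subset\{Q=0\}\}$ has codimension $6$ in $L^2_P$ if $P\cap P'=\emptyset$, codimension $5$ if $P\cap P'$ is a point, and codimension $3$ if $P\cap P'$ is a line. (2) Let $X\subset\mathbb P^6$ be a smooth cubic $5$-fold with $F_2(X)$ a smooth surface. For $[P]\neq[P']\in F_2(X)$ with $P\cap P'$ a line, $\dim(J_{X,2}\cap L^2_{P,P'})\ge1$, and if $X$ is general, $\dim(J_{X,2}\cap L^2_{P,P'})\ge2$. Consequently $(J_{X,2}\cap L^2_P)+L^2_{P,P'}\subsetneq L^2_P$, and for $X$ general this subspace has codimension at least $2$ in $L^2_P$.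
   Context: $H^0(\mathcal O_{\mathbb P^6}(2))$ is the space of quadratic forms in the coordinates $X_0,\dots,X_6$ of $\mathbb P^6$. For a cubic $X=\{\mathrm{eq}_X=0\}$, $J_{X,2}\subset H^0(\mathcal O_{\mathbb P^6}(2))$ is the degree $2$ part of the Jacobian ideal, spanned by the partial derivatives $\partial\mathrm{eq}_X/\partial X_i$, $i=0,\dots,6$. $F_2(X)$ is the variety of planes contained in $X$. (For $[P]\in F_2(X)$ smooth point, $\dim(J_{X,2}\cap L^2_P)=3$.) *)

(* Defs.v *)
From HB Require Import structures.
From mathcomp Require Import all_boot all_order all_algebra.
From mathcomp Require Import mpoly.
Set Implicit Arguments. Unset Strict Implicit. Unset Printing Implicit Defensive.
Import GRing.Theory.
Local Open Scope ring_scope.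

Section LinAlg.
Variables (K : fieldType) (W : lmodType K).

Definition indep_mod (A : W -> Prop) (k : nat) (w : 'I_k -> W) :=
  forall a : 'I_k -> K, A (\sum_(i < k) a i *: w i) -> forall i, a i = 0.

Definition codim (A B : W -> Prop) (c : nat) :=
  exists w : 'I_c -> W, [/\ forall i, B (w i), indep_mod A w &
    forall b, B b -> exists a : 'I_c -> K, A (b - \sum_(i < c) a i *: w i)].

Definition codim_ge (A B : W -> Prop) (c : nat) :=
  exists w : 'I_c -> W, (forall i, B (w i)) /\ indep_mod A w.

Definition dim_ge (S : W -> Prop) (k : nat) := codim_ge (fun x => x = 0) S k.

Definition sub_inter (A B : W -> Prop) : W -> Prop := fun x => A x /\ B x.
Definition sub_sum (A B : W -> Prop) : W -> Prop :=
  fun x => exists a b, [/\ A a, B b & x = a + b].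
Definition proper_subspace (A B : W -> Prop) :=
  (forall x, A x -> B x) /\ exists x, B x /\ ~ A x.
End LinAlg.

Section Geometry.
Variable F : fieldType.
Local Notation V := 'rV[F]_7.            (* V = F^7, P^6 = P(V) *)
Local Notation poly7 := {mpoly F[7]}.

Definition pt (v : V) : 'I_7 -> F := fun i => v 0 i.

Definition is_plane (P : {vspace V}) := \dim P = 3%N.

Definition H2 : poly7 -> Prop := fun Q => Q \is 2.-homog.

Definition L2 (P : {vspace V}) : poly7 -> Prop :=
  fun Q => Q \is 2.-homog /\ forall v, v \in P -> Q.@[pt v] = 0.

Definition L2pair (P P' : {vspace V}) : poly7 -> Prop :=
  sub_inter (L2 P) (L2 P').

Definition J2 (f : poly7) : poly7 -> Prop :=
  fun Q => exists c : 'I_7 -> F, Q = \sum_(i < 7) c i *: mderiv i f.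

Definition smooth_cubic (f : poly7) :=
  [/\ f \is 3.-homog, f != 0 &
      forall x : 'I_7 -> F, (forall i, (mderiv i f).@[x] = 0) ->
        forall i, x i = 0].

Definition inF2 (f : poly7) (P : {vspace V}) :=
  is_plane P /\ forall v, v \in P -> f.@[pt v] = 0.

(* Zariski tangent space of the Fano scheme F_2(X) at [P]:
   T = Hom(P, V/P)-classes of first-order deformations, realized as
   T_F(f,P) / K(P) with T_F = {phi : V -> V | forall v in P, df_v(phi v) = 0}
   and K(P) = {phi | phi(P) <= P}. *)
Definition dgrad (f : poly7) (v w : V) : F :=
  \sum_(i < 7) (mderiv i f).@[pt v] * w 0 i.
Definition TF (f : poly7) (P : {vspace V}) : 'M[F]_7 -> Prop :=
  fun phi => forall v, v \in P -> dgrad f v (v *m phi) = 0.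
Definition KP (P : {vspace V}) : 'M[F]_7 -> Prop :=
  fun phi => forall v, v \in P -> v *m phi \in P.

(* F_2(X) is a smooth surface: nonempty and its Zariski tangent space has
   dimension 2 at every point *)
Definition F2_smooth_surface (f : poly7) :=
  (exists P, inF2 f P) /\ forall P, inF2 f P -> codim (KP P) (TF f P) 2.

(* "general" cubic: holds on a nonempty Zariski-open subset of the space of
   cubic forms (given by the nonvanishing of a polynomial in the coefficients) *)
Definition NC := #|{: 'X_{1..7 < 4}}|.
Definition coefs (f : poly7) : 'I_NC -> F := fun i => f@_(enum_val i).
Definition for_general_cubic (Pr : poly7 -> Prop) :=
  exists g : {mpoly F[NC]},
    (exists f0, f0 \is 3.-homog /\ g.@[coefs f0] != 0) /\
    forall f, f \is 3.-homog -> g.@[coefs f] != 0 -> Pr f.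
End Geometry.

(* Main.v *)
Require Import Defs.
From HB Require Import structures.
From mathcomp Require Import all_boot all_order all_algebra.
From mathcomp Require Import mpoly.
From mathcomp Require Import ring.
From Stdlib Require Import Lia ClassicalEpsilon.
Import GRing.Theory.
Local Open Scope ring_scope.

Set Implicit Arguments. Unset Strict Implicit. Unset Printing Implicit Defensive.

Section PolyFacts.
Variable F : fieldType.
Hypothesis hF : [pchar F] =i pred0.
Local Notation P7 := {mpoly F[7]}.

Lemma natf_inj : injective (fun n : nat => n%:R : F).
Proof.
have /pcharf0P H := hF.
have key : forall a b, (a <= b)%N -> a%:R = b%:R :> F -> a = b.
  move=> a b le; rewrite -(subnK le) natrD -{1}(add0r a%:R) => /addIr /esym/eqP.
  by rewrite H => /eqP ->.
move=> m n /= E; case: (leqP m n) => le; first exact: key.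
exact: esym (key _ _ (ltnW le) (esym E)).
Qed.

Lemma poly_ext0 (p : {poly F}) : (forall t, p.[t] = 0) -> p = 0.
Proof.
move=> H; apply/eqP; apply: contraT => pn0.
have := max_poly_roots pn0 (rs := [seq i%:R | i <- iota 0 (size p)]).
rewrite size_map size_iota ltnn; apply.
  by apply/allP => x /mapP[i _ ->]; rewrite /root H.
by rewrite map_inj_uniq ?iota_uniq //; apply: natf_inj.
Qed.

Lemma poly_ext (p q : {poly F}) : (forall t, p.[t] = q.[t]) -> p = q.
Proof.
move=> H; apply/eqP; rewrite -subr_eq0; apply/eqP/poly_ext0 => t.
by rewrite hornerD hornerN H subrr.
Qed.

Definition Tpol_def (x y : 'I_7 -> F) (p : P7) : {poly F} :=
  (map_mpoly polyC p).@[fun i => (x i)%:P + (y i)%:P * 'X].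
Fact Tpol_key : unit. Proof. by []. Qed.
Definition Tpol := locked_with Tpol_key Tpol_def.
Lemma TpolE : Tpol = Tpol_def. Proof. exact: unlock. Qed.

Definition Dder (y : 'I_7 -> F) (p : P7) : P7 := \sum_(i < 7) y i *: mderiv i p.

Definition TP x y (p : P7) :=
  [/\ forall t, (Tpol x y p).[t] = p.@[fun i => x i + t * y i],
      (Tpol x y p)`_0 = p.@[x] & (Tpol x y p)`_1 = (Dder y p).@[x]].

Lemma TpolD x y p q : Tpol x y (p + q) = Tpol x y p + Tpol x y q.
Proof. by rewrite TpolE /Tpol_def raddfD /= mevalD. Qed.
Lemma TpolM x y p q : Tpol x y (p * q) = Tpol x y p * Tpol x y q.
Proof. by rewrite TpolE /Tpol_def rmorphM /= mevalM. Qed.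
Lemma TpolC x y c : Tpol x y c%:MP = c%:P.
Proof. by rewrite TpolE /Tpol_def map_mpolyC mevalC. Qed.
Lemma TpolX x y i : Tpol x y 'X_i = (x i)%:P + (y i)%:P * 'X.
Proof. by rewrite TpolE /Tpol_def map_mpolyX mevalXU. Qed.

Lemma mderivXU (i j : 'I_7) : mderiv j ('X_i : P7) = (i == j)%:R%:MP.
Proof.
rewrite mderivX mnm1E; case: eqP => [->|_]; last by rewrite scale0r mpolyC0.
have -> : (U_(j) - U_(j) = 0)%MM by apply/mnmP => k; rewrite mnmBE subnn mnmE.
by rewrite mpolyX0 scale1r mpolyC1.
Qed.

Lemma DderD y p q : Dder y (p + q) = Dder y p + Dder y q.
Proof. by rewrite /Dder -big_split; apply: eq_bigr => i _; rewrite mderivD scalerDr. Qed.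

Lemma DderM y p q : Dder y (p * q) = Dder y p * q + p * Dder y q.
Proof.
rewrite /Dder mulr_suml mulr_sumr -big_split; apply: eq_bigr => i _.
by rewrite mderivM scalerDr scalerAl scalerAr.
Qed.

Lemma DderC y c : Dder y c%:MP = 0.
Proof. by rewrite /Dder big1 // => i _; rewrite mderivC scaler0. Qed.

Lemma DderX y i : Dder y 'X_i = (y i)%:MP.
Proof.
rewrite /Dder (bigD1 i) //= big1 => [|j /negPf ji]; last first.
  by rewrite mderivXU eq_sym ji mpolyC0 scaler0.
by rewrite addr0 mderivXU eqxx -mul_mpolyC mulr1.
Qed.

Lemma TP_add x y p q : TP x y p -> TP x y q -> TP x y (p + q).
Proof.
case=> [h1 h2 h3] [k1 k2 k3]; split.
- move=> t; rewrite (TpolD x y p q).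
  rewrite hornerD.
  rewrite h1 k1.
  by rewrite mevalD.
- rewrite (TpolD x y p q) coefD.
  rewrite h2 k2.
  by rewrite mevalD.
- rewrite (TpolD x y p q) coefD h3 k3.
  rewrite DderD.
  by rewrite mevalD.
Qed.
Lemma TP_mul x y p q : TP x y p -> TP x y q -> TP x y (p * q).
Proof.
case=> [h1 h2 h3] [k1 k2 k3]; split.
- by move=> t; rewrite TpolM hornerM h1 k1 mevalM.
- by rewrite TpolM coefM big_ord1 h2 k2 mevalM.
- rewrite TpolM coefM !big_ord_recr big_ord0 /= add0r h2 k2 h3 k3.
  by rewrite DderM mevalD !mevalM addrC.
Qed.

Lemma TP_C x y c : TP x y c%:MP.
Proof.
split; rewrite ?TpolC.
- by move=> t; rewrite hornerC mevalC.
- by rewrite coefC mevalC.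
- by rewrite coefC DderC meval0.
Qed.

Lemma TP_X x y i : TP x y 'X_i.
Proof.
split; rewrite TpolX.
- by move=> t; rewrite hornerD hornerC hornerMX hornerC mevalXU mulrC.
- by rewrite coefD coefC coefCM coefX mulr0 addr0 mevalXU.
- by rewrite coefD coefC coefCM coefX mulr1 add0r DderX mevalC.
Qed.

Lemma TP_all x y p : TP x y p.
Proof.
have Xm : forall m, TP x y 'X_[m].
  move=> m; rewrite mpolyXE_id; apply: (big_ind (TP x y)).
  - by rewrite -mpolyC1; apply: TP_C.
  - exact: TP_mul.
  move=> i _; elim: (m i) => [|k IH]; first by rewrite expr0 -mpolyC1; apply: TP_C.
  by rewrite exprS; apply: TP_mul => //; apply: TP_X.
rewrite [p]mpolyE; apply: (big_ind (TP x y)).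
- by rewrite -mpolyC0; apply: TP_C.
- exact: TP_add.
by move=> m _; rewrite -mul_mpolyC; apply: TP_mul => //; apply: TP_C.
Qed.

Lemma deriv_vanish (p : P7) x y :
  (forall t, p.@[fun i => x i + t * y i] = 0) -> (Dder y p).@[x] = 0.
Proof.
move=> H; have [h1 _ h3] := TP_all x y p.
have T0 : Tpol x y p = 0 by apply: poly_ext0 => t; rewrite h1 H.
by rewrite -h3 T0 coef0.
Qed.

Lemma homog_scale d (p : P7) s x : p \is d.-homog ->
  p.@[fun i => s * x i] = s ^+ d * p.@[x].
Proof.
move=> /dhomog_mf hd; rewrite !mevalE mulr_sumr; apply: eq_big_seq => m mi.
rewrite mulrCA; congr (_ * _).
under eq_bigr do rewrite exprMn.
by rewrite big_split /= prodrXr -mdegE hd.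
Qed.

Lemma euler2 (g : P7) v : g \is 2.-homog -> (Dder v g).@[v] = 2%:R * g.@[v].
Proof.
move=> hg; have [h1 _ h3] := TP_all v v g.
have E : Tpol v v g = (g.@[v])%:P * (1 + 'X) ^+ 2.
  apply: poly_ext => t; rewrite h1 hornerM hornerC horner_exp hornerD hornerC hornerX.
  rewrite mulrC -homog_scale //; apply: meval_eq => i /=; ring.
rewrite -h3 E coefCM sqrrD expr1n mul1r !coefD coefX coefXn coef1 /=.
by rewrite add0r addr0 mulrC.
Qed.

Lemma mderiv_homog i d (p : P7) : p \is d.+1.-homog -> mderiv i p \is d.-homog.
Proof.
move=> hp; have hd := dhomog_mf hp.
rewrite [p]mpolyE big_seq raddf_sum; apply: rpred_sum => m mi.
change (mderiv i (p@_m *: 'X_[m]) \is d.-homog).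
rewrite mderivZ mderivX; case: (posnP (m i)) => [->|mpos].
  by rewrite scale0r scaler0 dhomog0.
apply: dhomogZ; apply: dhomogZ; rewrite dhomogX; apply/eqP.
have le : (U_(i) <= m)%MM.
  by apply/mnm_lepP => j; rewrite mnm1E; case: eqP => [<-|].
have E : mdeg m = d.+1 := hd m mi.
rewrite -(submK le) mdegD mdeg1 addn1 in E.
by case: E.
Qed.

Lemma two_neq0 : (2%:R : F) != 0.
Proof. by have /pcharf0P H := hF; rewrite H. Qed.

Lemma Dder_inj (f : P7) : f \is 3.-homog ->
  (forall x : 'I_7 -> F, (forall i, (mderiv i f).@[x] = 0) -> forall i, x i = 0) ->
  forall v, Dder v f = 0 -> forall i, v i = 0.
Proof.
move=> hf sm v Dv; apply: sm => i.
have hg : mderiv i f \is 2.-homog by apply: mderiv_homog.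
have E : Dder v (mderiv i f) = mderiv i (Dder v f).
  rewrite /Dder raddf_sum; apply: eq_bigr => j _.
  by rewrite /= mderivZ mderiv_comm.
have := euler2 v hg; rewrite E Dv raddf0 meval0 => /esym/eqP.
by rewrite mulf_eq0 (negPf two_neq0) => /eqP.
Qed.

Lemma meval_sum I (r : seq I) (Pr : pred I) (G : I -> P7) x :
  (\sum_(i <- r | Pr i) G i).@[x] = \sum_(i <- r | Pr i) (G i).@[x].
Proof. exact: raddf_sum. Qed.

Lemma Dder_eval y (p : P7) x : (Dder y p).@[x] = \sum_i y i * (mderiv i p).@[x].
Proof. by rewrite /Dder meval_sum; apply: eq_bigr => i _; rewrite mevalZ. Qed.

Lemma DderDl y z (p : P7) : Dder (fun i => y i + z i) p = Dder y p + Dder z p.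
Proof. by rewrite /Dder -big_split; apply: eq_bigr => i _; rewrite scalerDl. Qed.

Lemma DderZl c y (p : P7) : Dder (fun i => c * y i) p = c *: Dder y p.
Proof. by rewrite /Dder scaler_sumr; apply: eq_bigr => i _; rewrite scalerA. Qed.

End PolyFacts.

Section Quad.
Variable F : fieldType.
Local Notation P7 := {mpoly F[7]}.
Local Notation V := 'rV[F]_7.

Definition qf (A : 'M[F]_7) (x : 'I_7 -> F) := \sum_i \sum_j A i j * x i * x j.

Lemma qfD A B x : qf (A + B) x = qf A x + qf B x.
Proof.
rewrite /qf -big_split; apply: eq_bigr => i _; rewrite -big_split.
by apply: eq_bigr => j _; rewrite mxE !mulrDl.
Qed.

Lemma qf_delta c i j x : qf (c *: delta_mx i j) x = c * x i * x j.
Proof.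
rewrite /qf (bigD1 i) //= (bigD1 j) //= big1 => [|k /negPf kj]; last first.
  by rewrite !mxE eqxx kj mulr0 !mul0r.
rewrite big1 => [|k /negPf ki]; last first.
  by rewrite big1 // => l _; rewrite !mxE ki mulr0 !mul0r.
by rewrite !mxE !eqxx !addr0 mulr1.
Qed.

Lemma mono2 (m : 'X_{1..7}) : mdeg m = 2%N ->
  exists i j, forall x : 'I_7 -> F, ('X_[m] : P7).@[x] = x i * x j.
Proof.
move=> dm.
have [i Hi] : exists i, (0 < m i)%N.
  apply/existsP; apply: contraT; rewrite negb_exists => /forallP H.
  move: dm; rewrite mdegE big1 // => k _.
  by move: (H k); rewrite lt0n negbK => /eqP.
have le : (U_(i) <= m)%MM.
  by apply/mnm_lepP => j; rewrite mnm1E; case: eqP => [<-|].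
have E : mdeg m = 2%N := dm.
rewrite -(submK le) mdegD mdeg1 addn1 in E; case: E => /eqP /mdeg1P [j /eqP Ej].
exists j, i => x; rewrite -(submK le) Ej mpolyXD mevalM !mevalXU //.
Qed.

Lemma quad_rep_seq (s : seq 'X_{1..7}) (c : 'X_{1..7} -> F) :
  {in s, forall m, mdeg m = 2%N} ->
  exists A, forall x, (\sum_(m <- s) c m *: ('X_[m] : P7)).@[x] = qf A x.
Proof.
elim: s => [|m s IH] H.
  exists 0 => x; rewrite big_nil meval0 /qf big1 // => i _.
  by rewrite big1 // => j _; rewrite mxE !mul0r.
have [|A HA] := IH; first by move=> k ks; apply: H; rewrite inE ks orbT.
have dm : mdeg m = 2%N by apply: (H m); rewrite inE eqxx.
have [i [j Hij]] := mono2 dm.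
exists (A + c m *: delta_mx i j) => x.
by rewrite big_cons mevalD mevalZ Hij HA qfD qf_delta addrC mulrA.
Qed.

Lemma quad_rep (Q : P7) : Q \is 2.-homog -> exists A, forall x, Q.@[x] = qf A x.
Proof.
move=> /dhomog_mf hQ; rewrite [Q]mpolyE; apply: quad_rep_seq => m mi.
exact: hQ.
Qed.

Definition bil (A : 'M[F]_7) (u w : V) := \sum_i \sum_j A i j * u 0 i * w 0 j.

Lemma qf_bil A v : qf A (pt v) = bil A v v.
Proof. by []. Qed.

Lemma bilDl A u u' w : bil A (u + u') w = bil A u w + bil A u' w.
Proof.
rewrite /bil -big_split; apply: eq_bigr => i _; rewrite -big_split.
by apply: eq_bigr => j _; rewrite mxE mulrDr mulrDl.
Qed.
Lemma bilDr A u w w' : bil A u (w + w') = bil A u w + bil A u w'.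
Proof.
rewrite /bil -big_split; apply: eq_bigr => i _; rewrite -big_split.
by apply: eq_bigr => j _; rewrite mxE mulrDr.
Qed.
Lemma bilZl A a u w : bil A (a *: u) w = a * bil A u w.
Proof.
rewrite /bil mulr_sumr; apply: eq_bigr => i _; rewrite mulr_sumr.
by apply: eq_bigr => j _; rewrite mxE !mulrA [A i j * a]mulrC.
Qed.
Lemma bilZr A a u w : bil A u (a *: w) = a * bil A u w.
Proof.
rewrite /bil mulr_sumr; apply: eq_bigr => i _; rewrite mulr_sumr.
by apply: eq_bigr => j _; rewrite mxE mulrCA.
Qed.

Definition lf (y : V) : P7 := \sum_i y 0 i *: 'X_i.

Lemma lf_eval y x : (lf y).@[x] = \sum_i y 0 i * x i.
Proof. by rewrite /lf meval_sum; apply: eq_bigr => i _; rewrite mevalZ mevalXU. Qed.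

Lemma lf_homog y : lf y \is 1.-homog.
Proof.
by apply: rpred_sum => i _; apply: dhomogZ; rewrite dhomogX; apply/eqP; exact: mdeg1.
Qed.

Definition yv n (X : n.-tuple V) (j : 'I_n) : V := \row_i coord X j (delta_mx 0 i).

Lemma yv_eval n (X : n.-tuple V) j v : (lf (yv X j)).@[pt v] = coord X j v.
Proof.
rewrite lf_eval {2}(row_sum_delta v) linear_sum; apply: eq_bigr => i _.
by rewrite linearZ /= mxE mulrC.
Qed.

Lemma lf2_homog y z : lf y * lf z \is 2.-homog.
Proof. by have := dhomogM (lf_homog y) (lf_homog z). Qed.

End Quad.

Section Conf.
Variable F : fieldType.
Local Notation P7 := {mpoly F[7]}.
Local Notation V := 'rV[F]_7.

Lemma basis_size (U : {vspace V}) X : basis_of U X -> \dim U = size X.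
Proof. by move=> bX; rewrite -(span_basis bX); apply/eqnP/(basis_free bX). Qed.

Lemma direct_cap0 (U W Z : {vspace V}) : (W <= Z)%VS -> (U :&: Z = 0)%VS ->
  directv (U + W).
Proof.
move=> WZ UZ; apply/directv_addP; apply/eqP; rewrite -subv0 -UZ.
by apply: capvS.
Qed.

Lemma config (P P' : {vspace V}) : exists A B C : seq V,
  [/\ basis_of (P :&: P') A, basis_of P (B ++ A), basis_of P' (C ++ A)
    & free (C ++ B ++ A)].
Proof.
have d1 : directv (P :\: P' + P :&: P') := direct_cap0 (capvSr P P') (capv_diff P P').
have d2 : directv (P' :\: P + P :&: P').
  by apply: (direct_cap0 (Z := P)); [rewrite capvC; exact: capvSr|exact: capv_diff].
have bP := cat_basis d1 (vbasisP _) (vbasisP _); rewrite addv_diff_cap in bP.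
have bP' := cat_basis d2 (vbasisP _) (vbasisP _); rewrite capvC addv_diff_cap capvC in bP'.
exists (vbasis (P :&: P')), (vbasis (P :\: P')), (vbasis (P' :\: P)); split => //.
- exact: vbasisP.
- rewrite cat_free (basis_free (vbasisP _)) (basis_free bP) (span_basis bP) (span_basis (vbasisP _)) /=.
  by apply/directv_addP; apply: capv_diff.
Qed.

Lemma codim_restr (Bp Ap : P7 -> Prop) (S : {vspace V}) c (w : 'I_c -> P7) :
  (forall Q, Ap Q <-> Bp Q /\ forall v, v \in S -> Q.@[pt v] = 0) ->
  Bp 0 -> (forall x y, Bp x -> Bp y -> Bp (x + y)) ->
  (forall a x, Bp x -> Bp (a *: x)) ->
  (forall i, Bp (w i)) ->
  (forall a, (forall v, v \in S -> (\sum_i a i *: w i).@[pt v] = 0) -> forall i, a i = 0) ->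
  (forall Q, Bp Q -> exists a, forall v, v \in S -> Q.@[pt v] = (\sum_i a i *: w i).@[pt v]) ->
  codim Ap Bp c.
Proof.
move=> AB B0 BD BZ Bw ind sp; exists w; split => //.
- by move=> a /AB [_ H]; apply: ind.
- move=> b Bb; have [a Ha] := sp b Bb; exists a; apply/AB; split.
    apply BD => //; rewrite -scaleN1r; apply BZ.
    apply: (big_ind Bp); [exact: B0|exact: BD|move=> i _; exact: BZ].
  by move=> v vS; rewrite mevalB Ha // subrr.
Qed.
End Conf.


Section LA.
Variables (K : fieldType) (W : lmodType K).

Lemma sub_lincomb (A : W -> Prop) n (r : 'I_n -> K) (x : 'I_n -> W) :
  A 0 -> (forall x y, A x -> A y -> A (x + y)) -> (forall a x, A x -> A (a *: x)) ->
  (forall j, A (x j)) -> A (\sum_j r j *: x j).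
Proof.
move=> A0 AD AZ Ax; apply: (big_ind A); [exact: A0|exact: AD|].
by move=> j _; apply: AZ.
Qed.

Lemma codim_ge_le (A B : W -> Prop) c c' :
  A 0 -> (forall x y, A x -> A y -> A (x + y)) -> (forall a x, A x -> A (a *: x)) ->
  codim A B c -> codim_ge A B c' -> (c' <= c)%N.
Proof.
move=> A0 AD AZ [w [Bw _ sp]] [w' [Bw' ind]].
rewrite leqNgt; apply/negP => lt.
pose a j := proj1_sig (constructive_indefinite_description _ (sp (w' j) (Bw' j))).
have Ha j : A (w' j - \sum_i a j i *: w i).
  by rewrite /a; case: constructive_indefinite_description.
pose M : 'M[K]_(c', c) := \matrix_(j, i) a j i.
have rk : (\rank M < c')%N by apply: leq_ltn_trans (rank_leq_col M) lt.
have : kermx M != 0.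
  by rewrite -mxrank_eq0 mxrank_ker -lt0n subn_gt0.
case/rowV0Pn => r /sub_kermxP rM rn0.
have E : \sum_i (r *m M) 0 i *: w i = \sum_j r 0 j *: \sum_i a j i *: w i.
  under eq_bigr do rewrite mxE scaler_suml.
  rewrite exchange_big; apply: eq_bigr => j _; rewrite scaler_sumr.
  by apply: eq_bigr => i _; rewrite mxE scalerA.
have Ar : A (\sum_j r 0 j *: w' j).
  have -> : \sum_j r 0 j *: w' j =
      \sum_j r 0 j *: (w' j - \sum_i a j i *: w i) + \sum_i (r *m M) 0 i *: w i.
    by rewrite E; under [X in _ = X + _]eq_bigr do rewrite scalerBr; rewrite sumrB subrK.
  rewrite rM [X in _ + X]big1 ?addr0; last by move=> i _; rewrite (_ : (0 : 'rV[K]_c) 0 i = 0) ?scale0r // mxE.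
  exact: sub_lincomb.
by apply/negP: rn0; rewrite negbK; apply/eqP/rowP => j; rewrite mxE; apply: ind.
Qed.
End LA.

Section Geo.
Variable F : fieldType.
Hypothesis hF : [pchar F] =i pred0.
Local Notation P7 := {mpoly F[7]}.
Local Notation V := 'rV[F]_7.

Lemma sum2 (T : nmodType) (G : 'I_2 -> T) : \sum_i G i = G ord0 + G ord_max.
Proof. by rewrite big_ord_recl big_ord1; congr (_ + G _); apply: val_inj. Qed.

Lemma all2 (T : Type) (a : 'I_2 -> T) z : a ord0 = z -> a ord_max = z -> forall i, a i = z.
Proof.
move=> h0 h1 [[|[|//]] Hi].
  by rewrite -h0; congr a; apply: val_inj.
by rewrite -h1; congr a; apply: val_inj.
Qed.

Lemma L2_0 (P : {vspace V}) : L2 P (0 : P7).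
Proof. by split; [exact: dhomog0| move=> v _; rewrite meval0]. Qed.
Lemma L2_D (P : {vspace V}) (x y : P7) : L2 P x -> L2 P y -> L2 P (x + y).
Proof.
case=> hx vx [hy vy]; split; first exact: dhomogD.
by move=> v vP; rewrite mevalD vx // vy // addr0.
Qed.
Lemma L2_Z (P : {vspace V}) a (x : P7) : L2 P x -> L2 P (a *: x).
Proof.
case=> hx vx; split; first exact: dhomogZ.
by move=> v vP; rewrite mevalZ vx // mulr0.
Qed.

Lemma pt_lin (u v : V) a : pt (u + a *: v) =1 (fun i => pt u i + a * pt v i).
Proof. by move=> i; rewrite /pt !mxE. Qed.

Lemma Dc_vanish (f : P7) (P : {vspace V}) u c :
  (forall v, v \in P -> f.@[pt v] = 0) -> u \in P -> c \in P ->
  (Dder (pt c) f).@[pt u] = 0.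
Proof.
move=> fP uP cP; apply: deriv_vanish => // t.
by rewrite -(meval_eq _ (pt_lin u c t)); apply: fP; rewrite memvD // memvZ.
Qed.

Lemma Dc_homog (f : P7) y : f \is 3.-homog -> Dder y f \is 2.-homog.
Proof.
move=> hf; apply: rpred_sum => i _; apply: dhomogZ.
exact: mderiv_homog.
Qed.

Lemma Dc_L2 (f : P7) (P : {vspace V}) c : f \is 3.-homog ->
  (forall v, v \in P -> f.@[pt v] = 0) -> c \in P -> L2 P (Dder (pt c) f).
Proof.
move=> hf fP cP; split; first exact: Dc_homog.
by move=> v vP; apply: (Dc_vanish fP).
Qed.

Lemma Dc_lin (f : P7) a (u : V) b w :
  Dder (pt (a *: u + b *: w)) f = a *: Dder (pt u) f + b *: Dder (pt w) f.
Proof.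
rewrite /Dder scaler_sumr scaler_sumr -big_split; apply: eq_bigr => i _.
by rewrite /pt !mxE scalerDl !scalerA.
Qed.

Lemma vmul (v y c : V) : v *m (y^T *m c) = (\sum_i v 0 i * y 0 i) *: c.
Proof.
rewrite mulmxA [v *m y^T]mx11_scalar mul_scalar_mx; congr (_ *: _).
by rewrite !mxE; apply: eq_bigr => i _; rewrite mxE.
Qed.

Lemma coord_dot n (X : n.-tuple V) k (v : V) : \sum_i v 0 i * yv X k 0 i = coord X k v.
Proof. by rewrite -yv_eval lf_eval; apply: eq_bigr => i _; rewrite mulrC. Qed.

Lemma KP_0 (P : {vspace V}) : KP P 0.
Proof. by move=> v _; rewrite mulmx0 mem0v. Qed.
Lemma KP_D (P : {vspace V}) x y : KP P x -> KP P y -> KP P (x + y).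
Proof. by move=> hx hy v vP; rewrite mulmxDr memvD // ?hx ?hy. Qed.
Lemma KP_Z (P : {vspace V}) a x : KP P x -> KP P (a *: x).
Proof. by move=> hx v vP; rewrite -scalemxAr memvZ // hx. Qed.

Lemma stepB (f : P7) (P : {vspace V}) : is_plane P ->
  (forall v, v \in P -> f.@[pt v] = 0) ->
  codim (KP P) (TF f P) 2 ->
  forall Q, J2 f Q -> L2 P Q -> exists c, c \in P /\ Q = Dder (pt c) f.
Proof.
move=> plP fP cd Q [c0 ->] [_ QP].
pose cv : V := \row_i c0 i.
have Ecv : Dder (pt cv) f = \sum_i c0 i *: mderiv i f.
  by apply: eq_bigr => i _; rewrite /pt mxE.
exists cv; split => //.
case: (boolP (cv \in P)) => // nP; exfalso.
pose X := vbasis P.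
have frX := basis_free (vbasisP P).
pose w k := (yv X k)^T *m cv.
have cg : codim_ge (KP P) (TF f P) (\dim P).
  exists w; split.
  - move=> k v vP; rewrite /dgrad vmul coord_dot.
    have -> : \sum_i (mderiv i f).@[pt v] * (coord X k v *: cv) 0 i =
        coord X k v * (\sum_i c0 i *: mderiv i f).@[pt v].
      rewrite -Ecv Dder_eval mulr_sumr; apply: eq_bigr => i _.
      by rewrite /pt !mxE mulrCA [_ * c0 i]mulrC.
    by rewrite QP // mulr0.
  - move=> a Ka j.
    have vP : X`_j \in P by apply: vbasis_mem; apply: mem_nth; rewrite size_tuple.
    have := Ka _ vP; rewrite mulmx_sumr.
    under eq_bigr do rewrite -scalemxAr vmul coord_dot coord_free // scalerA.
    rewrite (bigD1 j) //= big1 => [|k /negPf kj]; last by rewrite eq_sym kj mulr0 scale0r.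
    rewrite eqxx mulr1 addr0 => H; apply/eqP; apply: contraT => aj.
    have : (a j)^-1 *: (a j *: cv) \in P by rewrite memvZ.
    by rewrite scalerK // (negPf nP).
have := codim_ge_le (@KP_0 P) (@KP_D P) (@KP_Z P) cd cg.
by rewrite plP.
Qed.

End Geo.

Section Part2.
Variable F : fieldType.
Hypothesis hF : [pchar F] =i pred0.
Local Notation P7 := {mpoly F[7]}.
Local Notation V := 'rV[F]_7.

Lemma DcD (f : P7) (u w : V) : Dder (pt (u + w)) f = Dder (pt u) f + Dder (pt w) f.
Proof.
rewrite /Dder -big_split; apply: eq_bigr => i _.
by rewrite /pt !mxE scalerDl.
Qed.
Lemma DcZ (f : P7) a (u : V) : Dder (pt (a *: u)) f = a *: Dder (pt u) f.
Proof.
rewrite /Dder scaler_sumr; apply: eq_bigr => i _.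
by rewrite /pt !mxE scalerA.
Qed.

Lemma dim_ge21 (S : P7 -> Prop) : dim_ge S 2 -> dim_ge S 1.
Proof.
case=> w [Sw ind]; exists (fun _ => w ord0); split => // a H i.
pose a2 : 'I_2 -> F := fun j => if j == ord0 then a ord0 else 0.
have := ind a2; rewrite sum2 /a2 /= scale0r addr0 => /(_ _ ord0) /=.
rewrite big_ord1 in H; move=> /(_ H); rewrite (ord1 i) //.
Qed.


Definition smoothP (f : P7) := forall x : 'I_7 -> F,
  (forall i, (mderiv i f).@[x] = 0) -> forall i, x i = 0.

Lemma part2 (f : P7) (P P' : {vspace V}) :
  f \is 3.-homog -> smoothP f ->
  (forall P, inF2 f P -> codim (KP P) (TF f P) 2) ->
  inF2 f P -> inF2 f P' -> \dim (P :&: P') = 2%N ->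
  dim_ge (sub_inter (J2 f) (L2pair P P')) 2 /\
  codim_ge (sub_sum (sub_inter (J2 f) (L2 P)) (L2pair P P')) (L2 P) 2.
Proof.
move=> hf sm F2s [plP fP] [plP' fP'] dI.
have [A [B [C [bA bP bP' fr]]]] := config P P'.
have sA := basis_size bA; have sB := basis_size bP; have sC := basis_size bP'.
rewrite dI in sA; rewrite plP size_cat -sA in sB; rewrite plP' size_cat -sA in sC.
move: A B C bA bP bP' fr sA sB sC.
case=> [|l0 [|l1 [|? ?]]] //; case=> [|p [|? ?]] //; case=> [|q [|? ?]] // => bA bP bP' fr sa sb sc;
  try (exfalso; simpl in sa, sb, sc; lia).
have l0P : l0 \in P by apply: (basis_mem bP); rewrite !inE eqxx ?orbT.
have l1P : l1 \in P by apply: (basis_mem bP); rewrite !inE eqxx ?orbT.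
have pP : p \in P by apply: (basis_mem bP); rewrite !inE eqxx ?orbT.
have l0P' : l0 \in P' by apply: (basis_mem bP'); rewrite !inE eqxx ?orbT.
have l1P' : l1 \in P' by apply: (basis_mem bP'); rewrite !inE eqxx ?orbT.
have qP' : q \in P' by apply: (basis_mem bP'); rewrite !inE eqxx ?orbT.
split.
  pose w (i : 'I_2) := if i == ord0 then Dder (pt l0) f else Dder (pt l1) f.
  exists w; split.
    move=> i; rewrite /w; case: ifP => _; split.
    - by exists (pt l0).
    - by split; apply: Dc_L2.
    - by exists (pt l1).
    - by split; apply: Dc_L2.
  move=> a; rewrite sum2 /w /= -!DcZ -DcD => /(Dder_inj hF hf sm) H.
  have E : a ord0 *: l0 + a ord_max *: l1 = 0 by apply/rowP => i; rewrite !mxE -(H i) /pt !mxE.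
  have fA : free [tuple l0; l1] by exact: (basis_free bA).
  have /freeP K := fA; have := K a; rewrite sum2 /= E => /(_ erefl) K2.
  by apply: all2; apply: K2.
pose X4 := [tuple q; p; l0; l1].
have fr4 : free X4 := fr.
pose iq : 'I_4 := @Ordinal 4 0 isT.
pose i0 : 'I_4 := @Ordinal 4 2 isT.
pose i1 : 'I_4 := @Ordinal 4 3 isT.
have cqq : coord X4 iq q = 1 := coord_free iq iq fr4.
have c0q : coord X4 i0 q = 0 := coord_free iq i0 fr4.
have c1q : coord X4 i1 q = 0 := coord_free iq i1 fr4.
have cq0 : coord X4 iq l0 = 0 := coord_free i0 iq fr4.
have c00 : coord X4 i0 l0 = 1 := coord_free i0 i0 fr4.
have c10 : coord X4 i1 l0 = 0 := coord_free i0 i1 fr4.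
have cq1 : coord X4 iq l1 = 0 := coord_free i1 iq fr4.
have c01 : coord X4 i0 l1 = 0 := coord_free i1 i0 fr4.
have c11 : coord X4 i1 l1 = 1 := coord_free i1 i1 fr4.
have cqp : coord X4 iq p = 0 := coord_free (@Ordinal 4 1 isT) iq fr4.
have cqP : forall v, v \in P -> coord X4 iq v = 0.
  move=> v vP; have bP3 : basis_of P [tuple p; l0; l1] := bP.
  rewrite (coord_basis bP3 vP) !big_ord_recr big_ord0 /= !linearD !linearZ /=.
  by rewrite linear0 cqp cq0 cq1 !mulr0 !addr0.
pose lq := lf (yv X4 iq); pose la := lf (yv X4 i0); pose lb := lf (yv X4 i1).
have ev2 : forall j k v, (lf (yv X4 j) * lf (yv X4 k)).@[pt v] = coord X4 j v * coord X4 k v.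
  by move=> j k v; rewrite mevalM !yv_eval.
have L2q : forall j, L2 P (lf (yv X4 j) * lq).
  move=> j; split; first exact: lf2_homog.
  by move=> v vP; rewrite ev2 cqP // mulr0.
pose D2 := Dder (pt p) f.
have Sk : forall x, sub_sum (sub_inter (J2 f) (L2 P)) (L2pair P P') x ->
    exists k, forall v, v \in P' -> x.@[pt v] = k * D2.@[pt v].
  move=> x [Qa [Qb [[JQ LQ] [_ [_ Qb0]] ->]]].
  have [c [cP ->]] := stepB plP fP (F2s P (conj plP fP)) JQ LQ.
  have bP3 : basis_of P [tuple p; l0; l1] := bP.
  exists (coord [tuple p; l0; l1] (widen_ord (leqnSn 2) (widen_ord (leqnSn 1) ord_max)) c) => v vP'.
  rewrite [X in Dder (pt X)](coord_basis bP3 cP) !big_ord_recr big_ord0 /= add0r !DcD !DcZ.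
  rewrite mevalD Qb0 // addr0 !mevalD !mevalZ.
  rewrite (Dc_vanish hF fP' vP' l0P') (Dc_vanish hF fP' vP' l1P') !mulr0 !addr0.
  done.
have gen : forall W0 W1 : P7, L2 P W0 -> L2 P W1 ->
   (forall a0 a1 k, (forall v, v \in P' -> (a0 *: W0 + a1 *: W1).@[pt v] = k * D2.@[pt v]) ->
      a0 = 0 /\ a1 = 0) ->
   codim_ge (sub_sum (sub_inter (J2 f) (L2 P)) (L2pair P P')) (L2 P) 2.
  move=> W0 W1 h0 h1 H; exists (fun i => if i == ord0 then W0 else W1); split.
    by move=> i; case: ifP.
  move=> a /Sk [k Hk]; rewrite sum2 /= in Hk; have [e0 e1] := H _ _ _ Hk.
  exact: all2.
have q0P : l0 + q \in P' by rewrite memvD.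
have q1P : l1 + q \in P' by rewrite memvD.
case: (eqVneq (D2.@[pt q]) 0) => [g0|gn0].
  case: (eqVneq (D2.@[pt (l0 + q)]) 0) => [a0|an0].
    apply: (gen _ _ (L2q iq) (L2q i0)) => b0 b1 k H.
    have Hq := H q qP'; have H0 := H _ q0P.
    rewrite !mevalD !mevalZ !ev2 !linearD /= in Hq H0.
    rewrite cqq c0q g0 in Hq; rewrite cqq c0q cq0 c00 a0 in H0.
    rewrite !(mul1r, mulr1, mul0r, mulr0, add0r, addr0) in Hq H0.
    by split => //; move: H0; rewrite Hq add0r.
  apply: (gen _ _ (L2q iq) (L2q i1)) => b0 b1 k H.
  have Hq := H q qP'; have H0 := H _ q0P; have H1 := H _ q1P.
  rewrite !mevalD !mevalZ !ev2 !linearD /= in Hq H0 H1.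
  rewrite cqq c1q g0 in Hq; rewrite cqq c1q cq0 c10 in H0.
  rewrite cqq c1q cq1 c11 in H1.
  rewrite !(mul1r, mulr1, mul0r, mulr0, add0r, addr0) in Hq H0 H1.
  rewrite Hq in H0; have k0 : k = 0.
    by apply/eqP; move/esym/eqP: H0; rewrite mulf_eq0 (negPf an0) orbF.
  by split => //; move: H1; rewrite Hq k0 mul0r add0r.
apply: (gen _ _ (L2q i0) (L2q i1)) => b0 b1 k H.
have Hq := H q qP'; have H0 := H _ q0P; have H1 := H _ q1P.
rewrite !mevalD !mevalZ !ev2 !linearD /= in Hq H0 H1.
rewrite cqq c0q c1q in Hq; rewrite cqq c0q c1q cq0 c00 c10 in H0.
rewrite cqq c0q c1q cq1 c01 c11 in H1.
rewrite !(mul1r, mulr1, mul0r, mulr0, add0r, addr0) in Hq H0 H1.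
have k0 : k = 0.
  by apply/eqP; move/esym/eqP: Hq; rewrite mulf_eq0 (negPf gn0) orbF.
by rewrite k0 !mul0r in H0 H1.
Qed.

End Part2.

Section Restr.
Variable F : fieldType.
Local Notation P7 := {mpoly F[7]}.
Local Notation V := 'rV[F]_7.

Notation o n k := (@Ordinal n k isT).

Lemma sum3 (T : nmodType) (G : 'I_3 -> T) : \sum_i G i = G (o 3 0) + G (o 3 1) + G (o 3 2).
Proof.
rewrite !big_ord_recr big_ord0 /= add0r.
by congr (G _ + G _ + G _); apply: val_inj.
Qed.

Lemma sum5 (T : nmodType) (G : 'I_5 -> T) :
  \sum_i G i = G (o 5 0) + G (o 5 1) + G (o 5 2) + G (o 5 3) + G (o 5 4).
Proof.
rewrite !big_ord_recr big_ord0 /= add0r.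
by congr (G _ + G _ + G _ + G _ + G _); apply: val_inj.
Qed.

Lemma sum6 (T : nmodType) (G : 'I_6 -> T) :
  \sum_i G i = G (o 6 0) + G (o 6 1) + G (o 6 2) + G (o 6 3) + G (o 6 4) + G (o 6 5).
Proof.
rewrite !big_ord_recr big_ord0 /= add0r.
by congr (G _ + G _ + G _ + G _ + G _ + G _); apply: val_inj.
Qed.

Lemma ordP3 (Pr : 'I_3 -> Prop) : Pr (o 3 0) -> Pr (o 3 1) -> Pr (o 3 2) -> forall i, Pr i.
Proof.
by move=> h0 h1 h2 [[|[|[|//]]] Hi]; [move: h0|move: h1|move: h2];
  rewrite (bool_irrelevance Hi isT).
Qed.

Lemma ordP5 (Pr : 'I_5 -> Prop) : Pr (o 5 0) -> Pr (o 5 1) -> Pr (o 5 2) ->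
  Pr (o 5 3) -> Pr (o 5 4) -> forall i, Pr i.
Proof.
by move=> h0 h1 h2 h3 h4 [[|[|[|[|[|//]]]]] Hi];
  [move: h0|move: h1|move: h2|move: h3|move: h4]; rewrite (bool_irrelevance Hi isT).
Qed.

Lemma ordP6 (Pr : 'I_6 -> Prop) : Pr (o 6 0) -> Pr (o 6 1) -> Pr (o 6 2) ->
  Pr (o 6 3) -> Pr (o 6 4) -> Pr (o 6 5) -> forall i, Pr i.
Proof.
by move=> h0 h1 h2 h3 h4 h5 [[|[|[|[|[|[|//]]]]]] Hi];
  [move: h0|move: h1|move: h2|move: h3|move: h4|move: h5]; rewrite (bool_irrelevance Hi isT).
Qed.


Definition comb (u0 u1 u2 : V) s0 s1 s2 := s0 *: u0 + s1 *: u1 + s2 *: u2.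

Definition w6 (y0 y1 y2 : V) (i : 'I_6) : P7 :=
  match val i with
  | 0 => lf y0 * lf y0 | 1 => lf y1 * lf y1 | 2 => lf y2 * lf y2
  | 3 => lf y0 * lf y1 | 4 => lf y0 * lf y2 | _ => lf y1 * lf y2 end.

Lemma comb_mem (S : {vspace V}) u0 u1 u2 s0 s1 s2 :
  u0 \in S -> u1 \in S -> u2 \in S -> comb u0 u1 u2 s0 s1 s2 \in S.
Proof. by move=> h0 h1 h2; rewrite !memvD // memvZ. Qed.

Lemma restr6 (Bp Ap : P7 -> Prop) (S : {vspace V}) (u0 u1 u2 y0 y1 y2 : V) :
  (forall Q, Ap Q <-> Bp Q /\ forall v, v \in S -> Q.@[pt v] = 0) ->
  Bp 0 -> (forall x y, Bp x -> Bp y -> Bp (x + y)) ->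
  (forall a x, Bp x -> Bp (a *: x)) ->
  (forall Q, Bp Q -> Q \is 2.-homog) ->
  (forall i, Bp (w6 y0 y1 y2 i)) ->
  u0 \in S -> u1 \in S -> u2 \in S ->
  (forall v, v \in S -> exists s0 s1 s2, v = comb u0 u1 u2 s0 s1 s2) ->
  (forall s0 s1 s2, (lf y0).@[pt (comb u0 u1 u2 s0 s1 s2)] = s0) ->
  (forall s0 s1 s2, (lf y1).@[pt (comb u0 u1 u2 s0 s1 s2)] = s1) ->
  (forall s0 s1 s2, (lf y2).@[pt (comb u0 u1 u2 s0 s1 s2)] = s2) ->
  codim Ap Bp 6.
Proof.
move=> AB B0 BD BZ Bh Bw h0 h1 h2 sp e0 e1 e2.
apply: (codim_restr AB B0 BD BZ Bw).
  move=> a H.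
  have G : forall s0 s1 s2, a (o 6 0) * (s0 * s0) + a (o 6 1) * (s1 * s1) + a (o 6 2) * (s2 * s2)
     + a (o 6 3) * (s0 * s1) + a (o 6 4) * (s0 * s2) + a (o 6 5) * (s1 * s2) = 0.
    move=> s0 s1 s2; rewrite -(H _ (comb_mem s0 s1 s2 h0 h1 h2)) sum6 /=.
    by rewrite !mevalD !mevalZ !mevalM !e0 !e1 !e2.
  have g100 := G 1 0 0; have g010 := G 0 1 0; have g001 := G 0 0 1.
  have g110 := G 1 1 0; have g101 := G 1 0 1; have g011 := G 0 1 1.
  rewrite !(mul0r, mulr0, mul1r, mulr1, add0r, addr0) in g100 g010 g001 g110 g101 g011.
  rewrite g100 g010 g001 !(add0r, addr0) in g110 g101 g011.
  by apply: ordP6.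
move=> Q BQ; have [A HA] := quad_rep (Bh _ BQ).
exists (fun i : 'I_6 => match val i with
  | 0 => bil A u0 u0 | 1 => bil A u1 u1 | 2 => bil A u2 u2
  | 3 => bil A u0 u1 + bil A u1 u0 | 4 => bil A u0 u2 + bil A u2 u0
  | _ => bil A u1 u2 + bil A u2 u1 end) => v vS.
have [s0 [s1 [s2 ->]]] := sp v vS.
rewrite HA qf_bil /comb !bilDl !bilDr !bilZl !bilZr sum6 /= -/(comb u0 u1 u2 s0 s1 s2).
rewrite !mevalD !mevalZ !mevalM !e0 !e1 !e2.
move: (bil A u0 u0) (bil A u0 u1) (bil A u0 u2) (bil A u1 u0) (bil A u1 u1)
  (bil A u1 u2) (bil A u2 u0) (bil A u2 u1) (bil A u2 u2) => b00 b01 b02 b10 b11 b12 b20 b21 b22.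
ring.
Qed.


Definition w5 (y0 y1 y2 : V) (i : 'I_5) : P7 :=
  match val i with
  | 0 => lf y0 * lf y0 | 1 => lf y1 * lf y1 | 2 => lf y0 * lf y1
  | 3 => lf y0 * lf y2 | _ => lf y1 * lf y2 end.

Lemma restr5 (Bp Ap : P7 -> Prop) (S : {vspace V}) (u0 u1 u2 y0 y1 y2 : V) :
  (forall Q, Ap Q <-> Bp Q /\ forall v, v \in S -> Q.@[pt v] = 0) ->
  Bp 0 -> (forall x y, Bp x -> Bp y -> Bp (x + y)) ->
  (forall a x, Bp x -> Bp (a *: x)) ->
  (forall Q, Bp Q -> Q \is 2.-homog) ->
  (forall Q, Bp Q -> Q.@[pt u2] = 0) ->
  (forall i, Bp (w5 y0 y1 y2 i)) ->
  u0 \in S -> u1 \in S -> u2 \in S ->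
  (forall v, v \in S -> exists s0 s1 s2, v = comb u0 u1 u2 s0 s1 s2) ->
  (forall s0 s1 s2, (lf y0).@[pt (comb u0 u1 u2 s0 s1 s2)] = s0) ->
  (forall s0 s1 s2, (lf y1).@[pt (comb u0 u1 u2 s0 s1 s2)] = s1) ->
  (forall s0 s1 s2, (lf y2).@[pt (comb u0 u1 u2 s0 s1 s2)] = s2) ->
  codim Ap Bp 5.
Proof.
move=> AB B0 BD BZ Bh Bu2 Bw h0 h1 h2 sp e0 e1 e2.
apply: (codim_restr AB B0 BD BZ Bw).
  move=> a H.
  have G : forall s0 s1 s2, a (o 5 0) * (s0 * s0) + a (o 5 1) * (s1 * s1)
     + a (o 5 2) * (s0 * s1) + a (o 5 3) * (s0 * s2) + a (o 5 4) * (s1 * s2) = 0.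
    move=> s0 s1 s2; rewrite -(H _ (comb_mem s0 s1 s2 h0 h1 h2)) sum5 /=.
    by rewrite !mevalD !mevalZ !mevalM !e0 !e1 !e2.
  have g100 := G 1 0 0; have g010 := G 0 1 0.
  have g110 := G 1 1 0; have g101 := G 1 0 1; have g011 := G 0 1 1.
  rewrite !(mul0r, mulr0, mul1r, mulr1, add0r, addr0) in g100 g010 g110 g101 g011.
  rewrite g100 g010 !(add0r, addr0) in g110 g101 g011.
  by apply: ordP5.
move=> Q BQ; have [A HA] := quad_rep (Bh _ BQ).
have b22 : bil A u2 u2 = 0 by rewrite -qf_bil -HA Bu2.
exists (fun i : 'I_5 => match val i with
  | 0 => bil A u0 u0 | 1 => bil A u1 u1
  | 2 => bil A u0 u1 + bil A u1 u0 | 3 => bil A u0 u2 + bil A u2 u0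
  | _ => bil A u1 u2 + bil A u2 u1 end) => v vS.
have [s0 [s1 [s2 ->]]] := sp v vS.
rewrite HA qf_bil /comb !bilDl !bilDr !bilZl !bilZr sum5 /= -/(comb u0 u1 u2 s0 s1 s2).
rewrite !mevalD !mevalZ !mevalM !e0 !e1 !e2 b22.
move: (bil A u0 u0) (bil A u0 u1) (bil A u0 u2) (bil A u1 u0) (bil A u1 u1)
  (bil A u1 u2) (bil A u2 u0) (bil A u2 u1) => b00 b01 b02 b10 b11 b12 b20 b21.
ring.
Qed.

Definition w3 (y0 y1 y2 : V) (i : 'I_3) : P7 :=
  match val i with
  | 0 => lf y0 * lf y0 | 1 => lf y0 * lf y1 | _ => lf y0 * lf y2 end.

Lemma restr3 (Bp Ap : P7 -> Prop) (S : {vspace V}) (u0 u1 u2 y0 y1 y2 : V) :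
  (forall Q, Ap Q <-> Bp Q /\ forall v, v \in S -> Q.@[pt v] = 0) ->
  Bp 0 -> (forall x y, Bp x -> Bp y -> Bp (x + y)) ->
  (forall a x, Bp x -> Bp (a *: x)) ->
  (forall Q, Bp Q -> Q \is 2.-homog) ->
  (forall Q, Bp Q -> [/\ Q.@[pt u1] = 0, Q.@[pt u2] = 0 & Q.@[pt (u1 + u2)] = 0]) ->
  (forall i, Bp (w3 y0 y1 y2 i)) ->
  u0 \in S -> u1 \in S -> u2 \in S ->
  (forall v, v \in S -> exists s0 s1 s2, v = comb u0 u1 u2 s0 s1 s2) ->
  (forall s0 s1 s2, (lf y0).@[pt (comb u0 u1 u2 s0 s1 s2)] = s0) ->
  (forall s0 s1 s2, (lf y1).@[pt (comb u0 u1 u2 s0 s1 s2)] = s1) ->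
  (forall s0 s1 s2, (lf y2).@[pt (comb u0 u1 u2 s0 s1 s2)] = s2) ->
  codim Ap Bp 3.
Proof.
move=> AB B0 BD BZ Bh Bu Bw h0 h1 h2 sp e0 e1 e2.
apply: (codim_restr AB B0 BD BZ Bw).
  move=> a H.
  have G : forall s0 s1 s2, a (o 3 0) * (s0 * s0) + a (o 3 1) * (s0 * s1)
     + a (o 3 2) * (s0 * s2) = 0.
    move=> s0 s1 s2; rewrite -(H _ (comb_mem s0 s1 s2 h0 h1 h2)) sum3 /=.
    by rewrite !mevalD !mevalZ !mevalM !e0 !e1 !e2.
  have g100 := G 1 0 0; have g110 := G 1 1 0; have g101 := G 1 0 1.
  rewrite !(mul0r, mulr0, mul1r, mulr1, add0r, addr0) in g100 g110 g101.
  rewrite g100 !(add0r, addr0) in g110 g101.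
  by apply: ordP3.
move=> Q BQ; have [A HA] := quad_rep (Bh _ BQ).
have [q1 q2 q12] := Bu Q BQ.
have b11 : bil A u1 u1 = 0 by rewrite -qf_bil -HA q1.
have b22 : bil A u2 u2 = 0 by rewrite -qf_bil -HA q2.
have b12 : bil A u2 u1 = - bil A u1 u2.
  apply/eqP; rewrite -addr_eq0 addrC; apply/eqP.
  by move: q12; rewrite HA qf_bil !bilDl !bilDr b11 b22 add0r addr0.
exists (fun i : 'I_3 => match val i with
  | 0 => bil A u0 u0 | 1 => bil A u0 u1 + bil A u1 u0
  | _ => bil A u0 u2 + bil A u2 u0 end) => v vS.
have [s0 [s1 [s2 ->]]] := sp v vS.
rewrite HA qf_bil /comb !bilDl !bilDr !bilZl !bilZr sum3 /= -/(comb u0 u1 u2 s0 s1 s2).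
rewrite !mevalD !mevalZ !mevalM !e0 !e1 !e2 b11 b22 b12.
move: (bil A u0 u0) (bil A u0 u1) (bil A u0 u2) (bil A u1 u0)
  (bil A u1 u2) (bil A u2 u0) => b00 b01 b02 b10 b12' b20.
ring.
Qed.

End Restr.

Section Part1.
Variable F : fieldType.
Local Notation P7 := {mpoly F[7]}.
Local Notation V := 'rV[F]_7.
Notation o n k := (@Ordinal n k isT).

Lemma ev_comb n (X : n.-tuple V) (j a b c : 'I_n) s0 s1 s2 : free X ->
  (lf (yv X j)).@[pt (comb X`_a X`_b X`_c s0 s1 s2)] =
  s0 * (a == j)%:R + s1 * (b == j)%:R + s2 * (c == j)%:R.
Proof. by move=> fX; rewrite yv_eval /comb !linearD !linearZ /= !coord_free. Qed.

Lemma basis3_sp (S : {vspace V}) u0 u1 u2 : basis_of S [:: u0; u1; u2] ->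
  forall v, v \in S -> exists s0 s1 s2, v = comb u0 u1 u2 s0 s1 s2.
Proof.
move=> bS v vS; have b3 : basis_of S [tuple u0; u1; u2] := bS.
rewrite (coord_basis b3 vS) sum3 /=.
by do 3 eexists.
Qed.

Lemma L2pairE (P P' : {vspace V}) Q :
  L2pair P P' Q <-> L2 P Q /\ forall v, v \in P' -> Q.@[pt v] = 0.
Proof.
split; first by case=> h [_ h']; split.
by case=> [[h1 h2] h3]; split; split.
Qed.

Lemma L2_prod (P : {vspace V}) y z :
  (forall v, v \in P -> (lf y).@[pt v] = 0) -> L2 P (lf y * lf z).
Proof. by move=> H; split; [exact: lf2_homog| move=> v vP; rewrite mevalM H // mul0r]. Qed.

Lemma L2_prod' (P : {vspace V}) y z :
  (forall v, v \in P -> (lf z).@[pt v] = 0) -> L2 P (lf y * lf z).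
Proof. by move=> H; split; [exact: lf2_homog| move=> v vP; rewrite mevalM H // mulr0]. Qed.


Lemma ev_comb3 n (X : n.-tuple V) (j a b c : 'I_n) u0 u1 u2 s0 s1 s2 : free X ->
  X`_a = u0 -> X`_b = u1 -> X`_c = u2 ->
  (lf (yv X j)).@[pt (comb u0 u1 u2 s0 s1 s2)] =
  s0 * (a == j)%:R + s1 * (b == j)%:R + s2 * (c == j)%:R.
Proof. by move=> fX <- <- <-; apply: ev_comb. Qed.

Lemma mem3 (S : {vspace V}) u0 u1 u2 : basis_of S [:: u0; u1; u2] ->
  [/\ u0 \in S, u1 \in S & u2 \in S].
Proof. by move=> b; split; apply: (basis_mem b); rewrite !inE eqxx ?orbT. Qed.

Lemma case0 (P P' : {vspace V}) c0 c1 c2 b0 b1 b2 :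
  basis_of P [:: b0; b1; b2] -> basis_of P' [:: c0; c1; c2] ->
  free [:: c0; c1; c2; b0; b1; b2] -> codim (L2pair P P') (L2 P) 6.
Proof.
move=> bP bP' fr.
pose X := [tuple c0; c1; c2; b0; b1; b2]; have fX : free X := fr.
have van : forall j : 'I_6, (val j < 3)%N ->
    forall v, v \in P -> (lf (yv X j)).@[pt v] = 0.
  move=> j jl v vP; have [s0 [s1 [s2 ->]]] := basis3_sp bP vP.
  rewrite (ev_comb3 (a:=(o 6 3)) (b:=(o 6 4)) (c:=(o 6 5)) j _ _ _ fX) //.
  have ne : forall k : 'I_6, (3 <= val k)%N -> (k == j) = false.
    by move=> k hk; apply/negbTE; apply: contraTneq hk => ->; rewrite -ltnNge.
  by rewrite !ne // !mulr0 !addr0.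
have [h0 h1 h2] := mem3 bP'.
apply: (restr6 (y0 := yv X (o 6 0)) (y1 := yv X (o 6 1)) (y2 := yv X (o 6 2)) (@L2pairE P P') (@L2_0 _ P) (@L2_D _ P) (@L2_Z _ P) (fun Q h => h.1) _
   h0 h1 h2 (basis3_sp bP')).
- by apply: ordP6 => /=; apply: L2_prod; apply: van.
- by move=> s0 s1 s2; rewrite (ev_comb3 (a:=(o 6 0)) (b:=(o 6 1)) (c:=(o 6 2)) (o 6 0) _ _ _ fX) //= mulr1 !mulr0 !addr0.
- by move=> s0 s1 s2; rewrite (ev_comb3 (a:=(o 6 0)) (b:=(o 6 1)) (c:=(o 6 2)) (o 6 1) _ _ _ fX) //= mulr1 !mulr0 add0r addr0.
- by move=> s0 s1 s2; rewrite (ev_comb3 (a:=(o 6 0)) (b:=(o 6 1)) (c:=(o 6 2)) (o 6 2) _ _ _ fX) //= mulr1 !mulr0 !add0r.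
Qed.


Lemma case1 (P P' : {vspace V}) c0 c1 b0 b1 l :
  basis_of P [:: b0; b1; l] -> basis_of P' [:: c0; c1; l] ->
  free [:: c0; c1; b0; b1; l] -> codim (L2pair P P') (L2 P) 5.
Proof.
move=> bP bP' fr.
pose X := [tuple c0; c1; b0; b1; l]; have fX : free X := fr.
have van : forall j : 'I_5, (val j < 2)%N ->
    forall v, v \in P -> (lf (yv X j)).@[pt v] = 0.
  move=> j jl v vP; have [s0 [s1 [s2 ->]]] := basis3_sp bP vP.
  rewrite (ev_comb3 (a:=(o 5 2)) (b:=(o 5 3)) (c:=(o 5 4)) j _ _ _ fX) //.
  have ne : forall k : 'I_5, (2 <= val k)%N -> (k == j) = false.
    by move=> k hk; apply/negbTE; apply: contraTneq hk => ->; rewrite -ltnNge.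
  by rewrite !ne // !mulr0 !addr0.
have [h0 h1 h2] := mem3 bP'.
have [_ _ lP] := mem3 bP.
apply: (restr5 (y0 := yv X (o 5 0)) (y1 := yv X (o 5 1)) (y2 := yv X (o 5 4))
   (@L2pairE P P') (@L2_0 _ P) (@L2_D _ P) (@L2_Z _ P) (fun Q h => h.1) _ _
   h0 h1 h2 (basis3_sp bP')).
- by move=> Q [_ H]; apply: H.
- by apply: ordP5 => /=; apply: L2_prod; apply: van.
- by move=> s0 s1 s2; rewrite (ev_comb3 (a:=(o 5 0)) (b:=(o 5 1)) (c:=(o 5 4)) (o 5 0) _ _ _ fX) //= mulr1 !mulr0 !addr0.
- by move=> s0 s1 s2; rewrite (ev_comb3 (a:=(o 5 0)) (b:=(o 5 1)) (c:=(o 5 4)) (o 5 1) _ _ _ fX) //= mulr1 !mulr0 add0r addr0.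
- by move=> s0 s1 s2; rewrite (ev_comb3 (a:=(o 5 0)) (b:=(o 5 1)) (c:=(o 5 4)) (o 5 4) _ _ _ fX) //= mulr1 !mulr0 !add0r.
Qed.

Lemma case2 (P P' : {vspace V}) c b l0 l1 :
  basis_of P [:: b; l0; l1] -> basis_of P' [:: c; l0; l1] ->
  free [:: c; b; l0; l1] -> codim (L2pair P P') (L2 P) 3.
Proof.
move=> bP bP' fr.
pose X := [tuple c; b; l0; l1]; have fX : free X := fr.
have van : forall v, v \in P -> (lf (yv X (o 4 0))).@[pt v] = 0.
  move=> v vP; have [s0 [s1 [s2 ->]]] := basis3_sp bP vP.
  rewrite (ev_comb3 (a:=(o 4 1)) (b:=(o 4 2)) (c:=(o 4 3)) (o 4 0) _ _ _ fX) //=.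
  by rewrite !mulr0 !addr0.
have [h0 h1 h2] := mem3 bP'.
have [_ l0P l1P] := mem3 bP.
apply: (restr3 (y0 := yv X (o 4 0)) (y1 := yv X (o 4 2)) (y2 := yv X (o 4 3))
   (@L2pairE P P') (@L2_0 _ P) (@L2_D _ P) (@L2_Z _ P) (fun Q h => h.1) _ _
   h0 h1 h2 (basis3_sp bP')).
- by move=> Q [_ H]; split; apply: H; rewrite ?memvD.
- by apply: ordP3 => /=; apply: L2_prod; apply: van.
- by move=> s0 s1 s2; rewrite (ev_comb3 (a:=(o 4 0)) (b:=(o 4 2)) (c:=(o 4 3)) (o 4 0) _ _ _ fX) //= mulr1 !mulr0 !addr0.
- by move=> s0 s1 s2; rewrite (ev_comb3 (a:=(o 4 0)) (b:=(o 4 2)) (c:=(o 4 3)) (o 4 2) _ _ _ fX) //= mulr1 !mulr0 add0r addr0.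
- by move=> s0 s1 s2; rewrite (ev_comb3 (a:=(o 4 0)) (b:=(o 4 2)) (c:=(o 4 3)) (o 4 3) _ _ _ fX) //= mulr1 !mulr0 !add0r.
Qed.

Lemma case_a (P : {vspace V}) b0 b1 b2 :
  basis_of P [:: b0; b1; b2] -> codim (L2 P) (@H2 F) 6.
Proof.
move=> bP.
pose X := [tuple b0; b1; b2]; have fX : free X := basis_free bP.
have [h0 h1 h2] := mem3 bP.
have B0 : @H2 F 0 by rewrite /H2 dhomog0.
have BD : forall x y, @H2 F x -> @H2 F y -> @H2 F (x + y).
  by move=> x y hx hy; apply: dhomogD.
have BZ : forall a x, @H2 F x -> @H2 F (a *: x).
  by move=> a x hx; apply: dhomogZ.
apply: (restr6 (y0 := yv X (o 3 0)) (y1 := yv X (o 3 1)) (y2 := yv X (o 3 2))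
   (Ap := L2 P) (Bp := @H2 F) _ B0 BD BZ (fun Q h => h) _ h0 h1 h2 (basis3_sp bP)).
- by move=> Q; split.
- by apply: ordP6 => /=; apply: lf2_homog.
- by move=> s0 s1 s2; rewrite (ev_comb3 (a:=(o 3 0)) (b:=(o 3 1)) (c:=(o 3 2)) (o 3 0) _ _ _ fX) //= mulr1 !mulr0 !addr0.
- by move=> s0 s1 s2; rewrite (ev_comb3 (a:=(o 3 0)) (b:=(o 3 1)) (c:=(o 3 2)) (o 3 1) _ _ _ fX) //= mulr1 !mulr0 add0r addr0.
- by move=> s0 s1 s2; rewrite (ev_comb3 (a:=(o 3 0)) (b:=(o 3 1)) (c:=(o 3 2)) (o 3 2) _ _ _ fX) //= mulr1 !mulr0 !add0r.
Qed.

End Part1.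

Unset Implicit Arguments. Set Strict Implicit.

Theorem mainTheorem9 (F : closedFieldType) (hF : [pchar F] =i pred0) :
  (* (1) *)
  (forall P : {vspace 'rV[F]_7}, is_plane P -> codim (L2 P) (@H2 F) 6) /\
  (forall P P' : {vspace 'rV[F]_7}, is_plane P -> is_plane P' -> P != P' ->
     [/\ \dim (P :&: P') = 0%N -> codim (L2pair P P') (L2 P) 6,
         \dim (P :&: P') = 1%N -> codim (L2pair P P') (L2 P) 5 &
         \dim (P :&: P') = 2%N -> codim (L2pair P P') (L2 P) 3]) /\
  (* (2) *)
  (forall f : {mpoly F[7]}, smooth_cubic f -> F2_smooth_surface f ->
     forall P P', inF2 f P -> inF2 f P' -> P != P' -> \dim (P :&: P') = 2%N ->
       dim_ge (sub_inter (J2 f) (L2pair P P')) 1 /\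
       proper_subspace (sub_sum (sub_inter (J2 f) (L2 P)) (L2pair P P')) (L2 P)) /\
  for_general_cubic (fun f : {mpoly F[7]} => smooth_cubic f -> F2_smooth_surface f ->
     forall P P', inF2 f P -> inF2 f P' -> P != P' -> \dim (P :&: P') = 2%N ->
       dim_ge (sub_inter (J2 f) (L2pair P P')) 2 /\
       codim_ge (sub_sum (sub_inter (J2 f) (L2 P)) (L2pair P P')) (L2 P) 2).
Proof.
split.
  move=> P plP.
  have [X [bP sz]] : exists X : seq 'rV[F]_7, basis_of P X /\ size X = 3%N.
    by exists (vbasis P); split; [exact: vbasisP | rewrite size_tuple].
  move: X bP sz; case=> [|b0 [|b1 [|b2 [|? ?]]]] // bP _.
  exact: case_a bP.
split.
  move=> P P' plP plP' _.
  have [A [B [C [bA bP bP' fr]]]] := config P P'.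
  have sA := basis_size bA; have sB := basis_size bP; have sC := basis_size bP'.
  rewrite plP size_cat in sB; rewrite plP' size_cat in sC.
  split => dI; rewrite dI in sA; rewrite -sA in sB sC; move: A B C bA bP bP' fr sA sB sC.
  - case=> [|? ?] //; case=> [|b0 [|b1 [|b2 [|? ?]]]] //; case=> [|c0 [|c1 [|c2 [|? ?]]]] //
      => bA bP bP' fr sa sb sc; try (exfalso; simpl in sa, sb, sc; lia).
    exact: case0 bP bP' fr.
  - case=> [|l [|? ?]] //; case=> [|b0 [|b1 [|? ?]]] //; case=> [|c0 [|c1 [|? ?]]] //
      => bA bP bP' fr sa sb sc; try (exfalso; simpl in sa, sb, sc; lia).
    exact: case1 bP bP' fr.
  - case=> [|l0 [|l1 [|? ?]]] //; case=> [|b [|? ?]] //; case=> [|c [|? ?]] //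
      => bA bP bP' fr sa sb sc; try (exfalso; simpl in sa, sb, sc; lia).
    exact: case2 bP bP' fr.
have P2 := part2 hF.
split.
  move=> f [hf3 _ sm] [_ F2s] P P' inP inP' _ dI.
  have [d2 c2] := P2 f P P' hf3 sm F2s inP inP' dI.
  split; first exact: dim_ge21 d2.
  split.
    by move=> x [a [b [[_ La] [Lb _] ->]]]; apply: L2_D.
  case: c2 => w [Lw ind]; exists (w ord0); split => // Sx.
  have := ind (fun i => if i == ord0 then 1 else 0).
  rewrite sum2 /= scale1r scale0r addr0 => /(_ Sx ord0) /= /eqP.
  by rewrite oner_eq0.
exists 1; split.
  by exists 0; split; [exact: dhomog0 | rewrite meval1 oner_eq0].
move=> f hf3 _ [_ _ sm] [_ F2s] P P' inP inP' _ dI.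
exact: P2 f P P' hf3 sm F2s inP inP' dI.
Qed.
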